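(* Let $p_1,p_2\in\mathbb{Z}^3$ be distinct, and let $\pi_1,\pi_2$ be two distinct integer affine planes in $\mathbb{R}^3$, both containing the line through $p_1$ and $p_2$ and neither containing the origin $O$. Then for arbitrary $p_3\in\pi_1\setminus\pi_2$ and $p_4\in\pi_2\setminus\pi_1$, \[ |\omega(p_1,p_2;p_3,p_4)|=\frac{{\rm Isin}(\pi_1,\pi_2)}{{\rm I}\ell(p_1,p_2)\,{\rm Id}(O,\pi_1)\,{\rm Id}(O,\pi_2)} . \]
   Context: $\omega(p_1,p_2;p_3,p_4)=\det(p_2-p_1,p_3-p_1,p_4-p_1)/(\det(p_1,p_2,p_3)\det(p_1,p_2,p_4))$, where $\det(u,v,w)$ is the determinant of the matrix with columns $u,v,w$. An integer plane is an affine plane containing a full-rank integer sublattice. ${\rm I}\ell(p,q)$ (integer length) is the number of integer points in the interior of segment $pq$ plus one. ${\rm Id}(p,\pi)$ (integer distance from integer point $p$ to integer plane $\pi$) is the index of the sublattice generated by all integer vectors with endpoints in $\{p\}\cup\pi$ in the lattice of integer vectors of the affine span of $p$ and $\pi$. ${\rm Isin}(\pi_1,\pi_2)$ (integer sine) is the index of the sublattice generated by all integer vectors of $\pi_1$ and of $\pi_2$ in the lattice of integer vectors of the affine span of $\pi_1\cup\pi_2$. *)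

(* Defs.v *)
From HB Require Import structures.
From mathcomp Require Import all_boot all_order all_algebra.
From mathcomp Require Import boolp classical_sets reals.
Set Implicit Arguments. Unset Strict Implicit. Unset Printing Implicit Defensive.
Import Order.TTheory GRing.Theory Num.Theory.
Local Open Scope ring_scope.
Local Open Scope classical_set_scope.

Section IntegerGeometry.
Variable R : realType.
Local Notation vec := 'rV[R]_3.

Definition int_pt (x : vec) : Prop := forall i : 'I_3, x 0 i \is a Num.int.

Definition det3 (u v w : vec) : R :=
  \det (\matrix_(i < 3, j < 3)
          (if (j : nat) == 0%N then u 0 i else if (j : nat) == 1%N then v 0 i else w 0 i)).

Definition omega (p1 p2 p3 p4 : vec) : R :=
  det3 (p2 - p1) (p3 - p1) (p4 - p1) / (det3 p1 p2 p3 * det3 p1 p2 p4).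

Definition lin_indep2 (u v : vec) : Prop :=
  forall a b : R, a *: u + b *: v = 0 -> a = 0 /\ b = 0.

Definition affine_plane (P : set vec) : Prop :=
  exists q u v : vec, lin_indep2 u v /\
    P = [set x | exists s t : R, x = q + s *: u + t *: v].

Definition integer_plane (P : set vec) : Prop :=
  affine_plane P /\
  exists q u v : vec, int_pt q /\ int_pt u /\ int_pt v /\ lin_indep2 u v /\
    forall a b : int, P (q + a%:~R *: u + b%:~R *: v).

Definition line_through (p q : vec) : set vec :=
  [set x | exists t : R, x = p + t *: (q - p)].

Definition has_card (S : set vec) (n : nat) : Prop :=
  exists f : 'I_n -> vec, injective f /\ range f = S.

Definition open_seg_int_pts (p q : vec) : set vec :=
  [set x | int_pt x /\ exists t : R, 0 < t < 1 /\ x = p + t *: (q - p)].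

Definition Il (p q : vec) : nat :=
  (xget 0%N [set n | has_card (open_seg_int_pts p q) n]).+1.

Definition zspan (S : set vec) : set vec :=
  [set x | exists n (c : 'I_n -> int) (w : 'I_n -> vec),
     (forall i, S (w i)) /\ x = \sum_(i < n) (w i) *~ (c i)].

Definition aff_span (S : set vec) : set vec :=
  [set x | exists n (c : 'I_n -> R) (w : 'I_n -> vec),
     (forall i, S (w i)) /\ \sum_(i < n) c i = 1 /\ x = \sum_(i < n) c i *: w i].

Definition span_int_lattice (S : set vec) : set vec :=
  [set v | int_pt v /\ exists x y, aff_span S x /\ aff_span S y /\ v = x - y].

Definition int_vecs_in (S : set vec) : set vec :=
  [set v | exists x y, S x /\ S y /\ int_pt x /\ int_pt y /\ v = x - y].

Definition is_index (L M : set vec) (n : nat) : Prop :=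
  exists r : 'I_n -> vec, (forall i, M (r i)) /\
    forall m, M m -> exists! i, L (m - r i).

Definition lat_index (L M : set vec) : nat :=
  xget 0%N [set n | is_index L M n].

Definition Id (p : vec) (P : set vec) : nat :=
  lat_index (zspan (int_vecs_in ([set p] `|` P))) (span_int_lattice ([set p] `|` P)).

Definition Isin (P1 P2 : set vec) : nat :=
  lat_index (zspan (int_vecs_in P1 `|` int_vecs_in P2)) (span_int_lattice (P1 `|` P2)).

End IntegerGeometry.

(* Main.v *)
Require Import Defs.
From HB Require Import structures.
From mathcomp Require Import all_boot all_order all_algebra.
From mathcomp Require Import boolp classical_sets reals.
From mathcomp Require Import ring lra.
Set Implicit Arguments. Unset Strict Implicit.
Import Order.TTheory GRing.Theory Num.Theory.
Local Open Scope ring_scope.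
Local Open Scope classical_set_scope.
Section Aux.
Variable R : realType.
Local Notation vec := 'rV[R]_3.
Definition i0 : 'I_3 := @Ordinal 3 0 isT.
Definition i1 : 'I_3 := @Ordinal 3 1 isT.
Definition i2 : 'I_3 := @Ordinal 3 2 isT.
Definition D3 (u v w : vec) : R :=
  u 0 i0 * (v 0 i1 * w 0 i2 - v 0 i2 * w 0 i1)
  - u 0 i1 * (v 0 i0 * w 0 i2 - v 0 i2 * w 0 i0)
  + u 0 i2 * (v 0 i0 * w 0 i1 - v 0 i1 * w 0 i0).
Definition dot (x y : vec) : R := x 0 i0 * y 0 i0 + x 0 i1 * y 0 i1 + x 0 i2 * y 0 i2.
Definition mkv (a b c : R) : vec :=
  \row_(j < 3) (if (j : nat) == 0%N then a else if (j : nat) == 1%N then b else c).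
Definition cross (u v : vec) : vec :=
  mkv (u 0 i1 * v 0 i2 - u 0 i2 * v 0 i1) (u 0 i2 * v 0 i0 - u 0 i0 * v 0 i2)
      (u 0 i0 * v 0 i1 - u 0 i1 * v 0 i0).

Lemma det3E u v w : det3 u v w = D3 u v w.
Proof.
rewrite /det3 (expand_det_row _ ord0) !big_ord_recl big_ord0 /cofactor.
rewrite !(expand_det_row _ ord0) !big_ord_recl !big_ord0 /cofactor !det_mx11.
rewrite !mxE /=.
have E0 : (ord0 : 'I_3) = i0 by apply/val_inj.
have E1 : (lift ord0 ord0 : 'I_3) = i1 by apply/val_inj.
have E2 : (lift ord0 (lift ord0 0) : 'I_3) = i2 by apply/val_inj.
rewrite E2 E1 E0 /bump /= /D3 expr0 expr1 ?expr2; ring.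
Qed.

Lemma mkv0 a b c : mkv a b c 0 i0 = a. Proof. by rewrite mxE. Qed.
Lemma mkv1 a b c : mkv a b c 0 i1 = b. Proof. by rewrite mxE. Qed.
Lemma mkv2 a b c : mkv a b c 0 i2 = c. Proof. by rewrite mxE. Qed.
Lemma cross0 u v : cross u v 0 i0 = u 0 i1 * v 0 i2 - u 0 i2 * v 0 i1. Proof. by rewrite mkv0. Qed.
Lemma cross1 u v : cross u v 0 i1 = u 0 i2 * v 0 i0 - u 0 i0 * v 0 i2. Proof. by rewrite mkv1. Qed.
Lemma cross2 u v : cross u v 0 i2 = u 0 i0 * v 0 i1 - u 0 i1 * v 0 i0. Proof. by rewrite mkv2. Qed.

Lemma vecP3 (x y : vec) : x 0 i0 = y 0 i0 -> x 0 i1 = y 0 i1 -> x 0 i2 = y 0 i2 -> x = y.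
Proof.
move=> h0 h1 h2; apply/rowP => i.
case: i => [[|[|[|//]]] Hi].
- by rewrite (_ : Ordinal Hi = i0) //; apply/val_inj.
- by rewrite (_ : Ordinal Hi = i1) //; apply/val_inj.
- by rewrite (_ : Ordinal Hi = i2) //; apply/val_inj.
Qed.

Ltac vs := rewrite /D3 /dot ?(cross0, cross1, cross2, mkv0, mkv1, mkv2, mxE).
Ltac vring := apply: vecP3; vs; ring.

Lemma I2v (a b c X : vec) :
  D3 a b c *: X = D3 X b c *: a + D3 a X c *: b + D3 a b X *: c.
Proof. vring. Qed.

Lemma I2n (a b c n X : vec) :
  D3 a b c * dot n X = D3 X b c * dot n a + D3 a X c * dot n b + D3 a b X * dot n c.
Proof. vs; ring. Qed.

Lemma I3 (e n f Y : vec) : D3 e (cross n f) Y = dot n Y * dot e f - dot f Y * dot e n.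
Proof. vs; ring. Qed.

Lemma dot_cross_self n f : dot n (cross n f) = 0.
Proof. vs; ring. Qed.

Lemma keyK (e f n m h v : vec) : dot n e = 0 -> dot n h = 1 -> dot e f = 1 ->
  dot m e = 0 -> dot n v = 0 -> dot m v = D3 e v h * dot m (cross n f).
Proof.
move=> ne nh ef me nv.
have := I2n e (cross n f) h m v.
have en : dot e n = 0 by rewrite /dot in ne *; lra.
rewrite !I3 ?nh ?ef ?nv ?en ?me => H; lra.
Qed.


Lemma int_ptE (x : vec) : int_pt x <->
  [/\ x 0 i0 \is a Num.int, x 0 i1 \is a Num.int & x 0 i2 \is a Num.int].
Proof.
split; first by move=> h; split; apply: h.
case=> h0 h1 h2 i; case: i => [[|[|[|//]]] Hi].
- by rewrite (_ : Ordinal Hi = i0) //; apply/val_inj.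
- by rewrite (_ : Ordinal Hi = i1) //; apply/val_inj.
- by rewrite (_ : Ordinal Hi = i2) //; apply/val_inj.
Qed.

Lemma int_ptD (x y : vec) : int_pt x -> int_pt y -> int_pt (x + y).
Proof. by move=> hx hy i; rewrite mxE rpredD. Qed.
Lemma int_ptN (x : vec) : int_pt x -> int_pt (- x).
Proof. by move=> hx i; rewrite mxE rpredN. Qed.
Lemma int_ptB (x y : vec) : int_pt x -> int_pt y -> int_pt (x - y).
Proof. by move=> hx hy; apply: int_ptD => //; apply: int_ptN. Qed.
Lemma int_pt0 : int_pt (0 : vec).
Proof. by move=> i; rewrite mxE. Qed.
Lemma int_ptZ (a : R) (x : vec) : a \is a Num.int -> int_pt x -> int_pt (a *: x).
Proof. by move=> ha hx i; rewrite mxE rpredM. Qed.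
Lemma int_ptMz (z : int) (x : vec) : int_pt x -> int_pt (x *~ z).
Proof. by move=> hx; rewrite -scaler_int; apply: int_ptZ => //; apply: intr_int. Qed.
Lemma int_pt_mkv a b c : a \is a Num.int -> b \is a Num.int -> c \is a Num.int ->
  int_pt (mkv a b c).
Proof. by move=> ha hb hc; apply/int_ptE; rewrite mkv0 mkv1 mkv2. Qed.
Lemma int_pt_cross (x y : vec) : int_pt x -> int_pt y -> int_pt (cross x y).
Proof.
move=> /int_ptE[? ? ?] /int_ptE[? ? ?].
by apply: int_pt_mkv; rewrite ?(rpredD, rpredB, rpredN, rpredM).
Qed.
Lemma int_dot (x y : vec) : int_pt x -> int_pt y -> dot x y \is a Num.int.
Proof. by move=> /int_ptE[? ? ?] /int_ptE[? ? ?]; rewrite /dot ?rpredD ?rpredM. Qed.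
Lemma int_D3 (x y z : vec) : int_pt x -> int_pt y -> int_pt z -> D3 x y z \is a Num.int.
Proof.
move=> /int_ptE[? ? ?] /int_ptE[? ? ?] /int_ptE[? ? ?].
by rewrite /D3 ?(rpredD, rpredB, rpredN, rpredM).
Qed.

Lemma prim (w : vec) : int_pt w -> w != 0 ->
  exists (g : nat) (e f : vec), [/\ (0 < g)%N, int_pt e, int_pt f,
     w = g%:R *: e & dot e f = 1].
Proof.
move=> /int_ptE[/intrP[a ha] /intrP[b hb] /intrP[c hc]] wn0.
pose G := gcdz (gcdz a b) c.
have GE : G = (`|G|%N)%:Z by [].
have Ga : (G %| a)%Z := dvdz_trans (dvdz_gcdl _ _) (dvdz_gcdl _ _).
have Gb : (G %| b)%Z := dvdz_trans (dvdz_gcdl _ _) (dvdz_gcdr _ _).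
have Gc : (G %| c)%Z := dvdz_gcdr _ _.
have G0 : G != 0.
  apply: contra wn0; rewrite /G gcdz_eq0 gcdz_eq0 => /andP[/andP[/eqP a0 /eqP b0] /eqP c0].
  by apply/eqP; apply: vecP3; rewrite ?ha ?hb ?hc ?a0 ?b0 ?c0 mxE.
have [u [v Huv]] := Bezoutz a b.
have [s [t Hst]] := Bezoutz (gcdz a b) c.
exists `|G|%N, (mkv (a %/ G)%Z%:~R (b %/ G)%Z%:~R (c %/ G)%Z%:~R),
  (mkv (s * u)%:~R (s * v)%:~R t%:~R); split.
- by rewrite absz_gt0.
- by apply: int_pt_mkv; apply: intr_int.
- by apply: int_pt_mkv; apply: intr_int.
- apply: vecP3; rewrite mxE ?mkv0 ?mkv1 ?mkv2 -[_%:R]/((`|G|%N)%:Z%:~R) -GE -intrM mulrC divzK //.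
- rewrite /dot !mkv0 !mkv1 !mkv2 -!intrM -!intrD.
  suff -> : ((a %/ G)%Z * (s * u) + (b %/ G)%Z * (s * v) + (c %/ G)%Z * t) = 1 by [].
  have HG : G = s * (u * a + v * b) + t * c by rewrite Huv Hst.
  apply: (mulfI G0); rewrite mulr1 [RHS]HG.
  move: (divzK Ga) (divzK Gb) (divzK Gc).
  set a' := (a %/ G)%Z; set b' := (b %/ G)%Z; set c' := (c %/ G)%Z => ea eb ec.
  rewrite -ea -eb -ec; ring.
Qed.


Lemma dot_self0 (x : vec) : dot x x = 0 -> x = 0.
Proof.
rewrite /dot => h.
have h0 : x 0 i0 = 0 by nra.
have h1 : x 0 i1 = 0 by nra.
have h2 : x 0 i2 = 0 by nra.
by apply: vecP3; rewrite mxE.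
Qed.

Lemma dotZl (a : R) (x y : vec) : dot (a *: x) y = a * dot x y.
Proof. vs; ring. Qed.
Lemma dotBr (x y z : vec) : dot x (y - z) = dot x y - dot x z.
Proof. vs; ring. Qed.
Lemma dotDr (x y z : vec) : dot x (y + z) = dot x y + dot x z.
Proof. vs; ring. Qed.
Lemma dotZr (a : R) (x y : vec) : dot x (a *: y) = a * dot x y.
Proof. vs; ring. Qed.
Lemma dot0r (x : vec) : dot x 0 = 0.
Proof. vs; ring. Qed.
Lemma dotDl (x y z : vec) : dot (x + y) z = dot x z + dot y z.
Proof. vs; ring. Qed.
Lemma dotC (x y : vec) : dot x y = dot y x.
Proof. vs; ring. Qed.
Lemma D3_cross (a b X : vec) : D3 a b X = dot (cross a b) X.
Proof. vs; ring. Qed.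

Lemma plane_normal (P : set vec) (p : vec) : integer_plane P -> P p ->
  exists n h : vec, [/\ int_pt n, int_pt h, dot n h = 1 &
     forall x, P x <-> dot n x = dot n p].
Proof.
case=> [[q' [u' [v' [li' HP]]]] [q [u [v [Iq [Iu [Iv [li Hlat]]]]]]]] Pp.
have inP x : P x <-> exists s t, x = q' + s *: u' + t *: v' by rewrite HP.
have [s0 [t0 E0]] : exists s t, q = q' + s *: u' + t *: v'.
  by apply/inP; have := Hlat 0 0; rewrite ?mulr0z !scale0r !addr0.
have [s1 [t1 E1]] : exists s t, q + u = q' + s *: u' + t *: v'.
  by apply/inP; have := Hlat 1 0; rewrite ?mulr0z ?mulr1z scale0r scale1r addr0.
have [s2 [t2 E2]] : exists s t, q + v = q' + s *: u' + t *: v'.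
  by apply/inP; have := Hlat 0 1; rewrite ?mulr0z ?mulr1z scale0r scale1r addr0.
have Eu : u = (s1 - s0) *: u' + (t1 - t0) *: v'.
  by rewrite -[u](addKr q) E1 E0; vring.
have Ev : v = (s2 - s0) *: u' + (t2 - t0) *: v'.
  by rewrite -[v](addKr q) E2 E0; vring.
have N0 : cross u v != 0.
  apply/eqP => N0.
  have : dot u v *: u - dot u u *: v = 0.
    rewrite (_ : _ - _ = cross u (cross u v)); first by rewrite N0; vring.
    vring.
  move=> /eqP; rewrite subr_eq0 => /eqP H.
  have [_ uu] : dot u v = 0 /\ - dot u u = 0.
    by apply: li; rewrite H scaleNr subrr.
  have u0 : u = 0 by apply: dot_self0; lra.
  have := li 1 0; rewrite u0 scaler0 scale0r addr0 => /(_ erefl) [/eqP].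
  by rewrite oner_eq0.
have [g [n [h [gpos In Ih Nn nh]]]] := prim (int_pt_cross Iu Iv) N0.
pose N' := cross u' v'.
pose k := (s1 - s0) * (t2 - t0) - (t1 - t0) * (s2 - s0).
have NN' : cross u v = k *: N' by rewrite Eu Ev /N' /k; vring.
have k0 : k != 0 by apply: contra N0; rewrite NN' => /eqP ->; rewrite scale0r.
have N'0 : N' != 0 by apply: contra N0; rewrite NN' => /eqP ->; rewrite scaler0.
have g0 : (g%:R : R) != 0 by rewrite pnatr_eq0 -lt0n.
have nN' y : dot n y = 0 <-> dot N' y = 0.
  have : g%:R * dot n y = k * dot N' y by rewrite -!dotZl -Nn NN'.
  move=> H; split => [h0|h0].
    by move: H; rewrite h0 mulr0 => /esym /eqP; rewrite mulf_eq0 (negbTE k0) => /eqP.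
  by move: H; rewrite h0 mulr0 => /eqP; rewrite mulf_eq0 (negbTE g0) => /eqP.
have plane x : P x <-> dot N' (x - q') = 0.
  split.
    move=> /inP [s [t ->]]; rewrite /N'; vs; ring.
  move=> hx; apply/inP.
  have Q0 : dot N' N' != 0 by apply: contra N'0 => /eqP /dot_self0 ->.
  have := I2v u' v' N' (x - q').
  rewrite [D3 u' v' (x - q')]D3_cross -/N' hx scale0r addr0.
  rewrite (_ : D3 u' v' N' = dot N' N'); last by rewrite D3_cross.
  set A := D3 (x - q') v' N'; set B := D3 u' (x - q') N'.
  move=> H.
  exists (A / dot N' N'), (B / dot N' N').
  have Hy : x - q' = (A / dot N' N') *: u' + (B / dot N' N') *: v'.
    have := congr1 (fun z => (dot N' N')^-1 *: z) H.
    rewrite /= scalerA mulVf // scale1r => ->.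
    by rewrite scalerDr !scalerA ![_^-1 * _]mulrC.
  by rewrite -addrA -Hy addrC subrK.
exists n, h; split => // x.
have hp : dot n (p - q') = 0 by apply/nN'; apply/plane.
rewrite plane -nN' dotBr; rewrite dotBr in hp; lra.
Qed.


Lemma zspan_ind (S Q : set vec) : Q 0 -> (forall x y, Q x -> Q y -> Q (x + y)) ->
  (forall x z, Q x -> Q (x *~ z)) -> (forall x, S x -> Q x) ->
  forall x, zspan S x -> Q x.
Proof.
move=> Q0 QD QZ SQ x [n [c [w [Sw ->]]]].
by apply: (big_ind Q) => // i _; apply: QZ; apply: SQ.
Qed.

Lemma zspan2 (S : set vec) a b (i j : int) : S a -> S b -> zspan S (a *~ i + b *~ j).
Proof.
move=> Sa Sb.
exists 2%N, (fun k : 'I_2 => if val k == 0%N then i else j),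
  (fun k : 'I_2 => if val k == 0%N then a else b); split.
  by case=> [[|[|]]].
by rewrite !big_ord_recl big_ord0 /= addr0.
Qed.

Lemma has_card_uniq (S : set vec) n m : has_card S n -> has_card S m -> n = m.
Proof.
suff H : forall n m, has_card S n -> has_card S m -> (n <= m)%N.
  by move=> h1 h2; apply/eqP; rewrite eqn_leq !(H _ _ h1 h2, H _ _ h2 h1).
move=> {}n {}m [f [fi fr]] [f' [fi' fr']].
have ex i : exists j, f' j = f i.
  have : S (f i) by rewrite -fr; exists i.
  by rewrite -fr' => -[j _ <-]; exists j.
have [phi Hphi] := choice ex.
have : injective phi by move=> i j e; apply: fi; rewrite -Hphi e Hphi.
by move/leq_card; rewrite !card_ord.
Qed.

Lemma is_index_uniq (L M : set vec) n m :
  (forall x y, M x -> M y -> M (x - y)) ->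
  (forall x y, M x -> M y -> L x -> L y -> L (x - y)) ->
  is_index L M n -> is_index L M m -> n = m.
Proof.
move=> MB LB.
suff H : forall n m, is_index L M n -> is_index L M m -> (n <= m)%N.
  by move=> h1 h2; apply/eqP; rewrite eqn_leq !(H _ _ h1 h2, H _ _ h2 h1).
move=> {}n {}m [r [Mr Hr]] [r' [Mr' Hr']].
have ex i : exists j, L (r i - r' j).
  by have [j [Lj _]] := Hr' (r i) (Mr i); exists j.
have [phi Hphi] := choice ex.
suff : injective phi by move/leq_card; rewrite !card_ord.
move=> i i' e.
have M1 : M (r i - r' (phi i)) by apply: MB.
have M2 : M (r i' - r' (phi i)) by apply: MB.
have L1 := Hphi i.
have L2 : L (r i' - r' (phi i)) by rewrite e; apply: Hphi.
have Li : L (r i - r i).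
  by rewrite subrr -(subrr (r i - r' (phi i))); apply: LB.
have Li' : L (r i - r i').
  rewrite (_ : r i - r i' = (r i - r' (phi i)) - (r i' - r' (phi i))); first by apply: LB.
  by vring.
have [k [_ uk]] := Hr (r i) (Mr i).
by rewrite -(uk _ Li) -(uk _ Li').
Qed.

Lemma aff_full (S : set vec) q a b c x : S q -> S a -> S b -> S c ->
  D3 (a - q) (b - q) (c - q) != 0 -> aff_span S x.
Proof.
move=> Sq Sa Sb Sc D0.
set D := D3 (a - q) (b - q) (c - q) in D0.
pose al := D3 (x - q) (b - q) (c - q) / D.
pose be := D3 (a - q) (x - q) (c - q) / D.
pose ga := D3 (a - q) (b - q) (x - q) / D.
have Hy : x - q = al *: (a - q) + be *: (b - q) + ga *: (c - q).
  have := congr1 (fun z => D^-1 *: z) (I2v (a - q) (b - q) (c - q) (x - q)).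
  rewrite /= scalerA mulVf // scale1r => ->.
  by rewrite !scalerDr !scalerA ![D^-1 * _]mulrC.
exists 4%N, (fun i : 'I_4 => nth 0 [:: 1 - al - be - ga; al; be; ga] i),
  (fun i : 'I_4 => nth 0 [:: q; a; b; c] i); split.
  by case=> [[|[|[|[|]]]]].
split; first by rewrite !big_ord_recl big_ord0 /=; ring.
rewrite !big_ord_recl big_ord0 /=.
apply/rowP => i.
have Hi : (x - q) 0 i = (al *: (a - q) + be *: (b - q) + ga *: (c - q)) 0 i by rewrite Hy.
rewrite !mxE in Hi; rewrite !mxE.
rewrite -[x 0 i](subrK (q 0 i)) Hi; ring.
Qed.

Lemma index_char (L M : set vec) (n h : vec) (c : R) :
  int_pt n -> int_pt h -> dot n h = 1 -> c \is a Num.int -> c != 0 ->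
  (forall x, M x <-> int_pt x) ->
  (forall x, int_pt x -> (L x <-> exists z : int, dot n x = z%:~R * c)) ->
  (lat_index L M)%:R = `|c|.
Proof.
move=> In Ih nh /intrP[k0 hc] c0 HM HL.
pose k := `|k0|%N.
have ck : `|c| = k%:R by rewrite hc -intr_norm natr_absz.
have kpos : (0 < k)%N by rewrite absz_gt0; apply: contra c0; rewrite hc => /eqP ->.
have LB x : int_pt x -> L x <-> exists z : int, dot n x = z%:~R * k%:R.
  move=> Ix; rewrite HL //; rewrite -ck.
  have [cp|cn] := lerP 0 c.
    by rewrite ger0_norm.
  rewrite ltr0_norm //; split => -[z hz]; exists (- z); rewrite hz intrN; ring.
have -> : lat_index L M = k; last by rewrite ck.
have HMB x y : M x -> M y -> M (x - y).
  by move=> /HM ? /HM ?; apply/HM; apply: int_ptB.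
have HLB x y : M x -> M y -> L x -> L y -> L (x - y).
  move=> /HM Mx /HM My /(LB _ Mx) [z1 h1] /(LB _ My) [z2 h2].
  apply/LB; first by apply: int_ptB.
  by exists (z1 - z2); rewrite dotBr h1 h2 intrB; ring.
have Hidx : is_index L M k.
  exists (fun i : 'I_k => (i : nat)%:R *: h); split.
    by move=> i; apply/HM; apply: int_ptZ => //; apply: natr_int.
  move=> m /HM Im.
  have /intrP[t ht] := int_dot In Im.
  have kz0 : (k : int) != 0 by rewrite eqz_nat -lt0n.
  pose T := (t %% k)%Z.
  have T0 : 0 <= T by apply: modz_ge0.
  have Tk : T < k by apply: ltz_pmod; rewrite ltz_nat.
  have TE : (`|T|%N : int) = T by rewrite gez0_abs.
  have Tlt : (`|T| < k)%N by rewrite -ltz_nat TE.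
  exists (Ordinal Tlt); split.
    apply/LB; first by apply: int_ptB => //; apply: int_ptZ => //; apply: natr_int.
    exists (t %/ k)%Z; rewrite dotBr dotZr nh mulr1 ht /=.
    rewrite -[(`|T|%N)%:R]/((`|T|%N : int)%:~R) TE -[k%:R]/((k : int)%:~R) -intrM -intrB.
    by congr (_%:~R); rewrite {1}(divz_eq t k) addrK.
  move=> j /(LB _ (int_ptB Im (int_ptZ (natr_int _ _) Ih))) [z hz].
  apply: val_inj => /=.
  rewrite dotBr dotZr nh mulr1 ht in hz.
  move: hz; rewrite -[(j : nat)%:R]/(((j : nat) : int)%:~R) -[k%:R]/((k : int)%:~R) -intrM -intrB.
  move=> /intr_inj hz.
  have : T = (j : nat) :> int.
    rewrite /T (_ : t = z * k + (j : nat)); last by rewrite -hz; ring.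
    rewrite modzMDl modz_small // lez_nat ltz_nat ltn_ord andbT //.
  by rewrite -TE => -[].
apply: xget_unique => // k' Hk'.
by apply: (is_index_uniq HMB HLB Hk' Hidx).
Qed.

Lemma Il_eq (p1 p2 e f : vec) (g : nat) : int_pt p1 -> int_pt e -> int_pt f ->
  (0 < g)%N -> p2 - p1 = g%:R *: e -> dot e f = 1 -> Il p1 p2 = g.
Proof.
move=> Ip Ie If gpos Hd ef.
pose f0 := fun i : 'I_g.-1 => p1 + (i : nat).+1%:R *: e.
suff HC : has_card (open_seg_int_pts p1 p2) g.-1.
  rewrite /Il (xget_unique _ HC) ?prednK // => m Hm.
  exact: has_card_uniq Hm HC.
have gR : (0 : R) < g%:R by rewrite ltr0n.
exists f0; split.
  move=> i j; rewrite /f0 => /(congr1 (fun z => dot z f)).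
  rewrite !dotDl !dotZl ef !mulr1 => /addrI /eqP.
  by rewrite eqr_nat eqSS => /eqP /val_inj.
apply/seteqP; split => x.
  move=> [i _ <-]; split.
    by apply: int_ptD => //; apply: int_ptZ => //; apply: natr_int.
  exists ((i : nat).+1%:R / g%:R); split.
    apply/andP; split; first by rewrite divr_gt0 // ltr0n.
    rewrite ltr_pdivrMr // mul1r ltr_nat.
    by have := ltn_ord i; rewrite -ltnS prednK.
  by rewrite Hd scalerA mulfVK // gt_eqF.
move=> [Ix [t [/andP[t0 t1] Ex]]]; subst x.
rewrite Hd scalerA.
have Iy : int_pt (t *: (g%:R *: e)).
  have -> : t *: (g%:R *: e) = (p1 + t *: (p2 - p1)) - p1 by rewrite Hd addrC addKr.
  exact: (int_ptB Ix Ip).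
have : dot (t *: (g%:R *: e)) f \is a Num.int by apply: int_dot.
rewrite !dotZl ef mulr1 => /intrP[m hm].
have m0 : (0 : R) < m%:~R by rewrite -hm mulr_gt0.
have mg : m%:~R < (g : int)%:~R :> R by rewrite -hm /= gtr_pMl.
rewrite ltr_int in mg; rewrite ltr0z in m0.
case: m hm m0 mg => // m' hm m0 mg.
rewrite ltz_nat in mg.
have Hlt : (m'.-1 < g.-1)%N.
  by rewrite -ltnS prednK // (leq_trans mg) // -ltnS prednK.
exists (Ordinal Hlt) => //.
by rewrite /f0 /= prednK // hm.
Qed.
End Aux.
Unset Implicit Arguments.
Ltac vs := rewrite /D3 /dot ?(cross0, cross1, cross2, mkv0, mkv1, mkv2, mxE).

Theorem proposition4p3 (R : realType) (p1 p2 p3 p4 : 'rV[R]_3)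
    (pi1 pi2 : set 'rV[R]_3) :
  int_pt p1 -> int_pt p2 -> p1 <> p2 ->
  integer_plane pi1 -> integer_plane pi2 -> pi1 <> pi2 ->
  line_through p1 p2 `<=` pi1 -> line_through p1 p2 `<=` pi2 ->
  ~ pi1 0 -> ~ pi2 0 ->
  pi1 p3 -> ~ pi2 p3 -> pi2 p4 -> ~ pi1 p4 ->
  `|omega p1 p2 p3 p4| =
    (Isin pi1 pi2)%:R / ((Il p1 p2)%:R * (Id 0 pi1)%:R * (Id 0 pi2)%:R).
Proof.
move=> Ip1 Ip2 p12 Hpi1 Hpi2 _ L1 L2 n01 n02 P3 nP3 P4 nP4.
have l1 : pi1 p1 by apply: L1; exists 0; rewrite scale0r addr0.
have l2 : pi1 p2 by apply: L1; exists 1; rewrite scale1r addrC subrK.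
have l1' : pi2 p1 by apply: L2; exists 0; rewrite scale0r addr0.
have l2' : pi2 p2 by apply: L2; exists 1; rewrite scale1r addrC subrK.
have [n1 [h1 [In1 Ih1 nh1 E1]]] := plane_normal Hpi1 l1.
have [n2 [h2 [In2 Ih2 nh2 E2]]] := plane_normal Hpi2 l1'.
have d0 : p2 - p1 != 0 by rewrite subr_eq0; apply/eqP => e; apply: p12.
have [g [e [f [gpos Ie If Hd ef]]]] := prim (int_ptB Ip2 Ip1) d0.
have g0 : (g%:R : R) != 0 by rewrite pnatr_eq0 -lt0n.
have ne1 : dot n1 e = 0.
  have H := proj1 (E1 p2) l2; rewrite -[p2](subrK p1) Hd dotDr dotZr in H.
  have : g%:R * dot n1 e = 0 by lra.
  by move/eqP; rewrite mulf_eq0 (negbTE g0) => /eqP.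
have ne2 : dot n2 e = 0.
  have H := proj1 (E2 p2) l2'; rewrite -[p2](subrK p1) Hd dotDr dotZr in H.
  have : g%:R * dot n2 e = 0 by lra.
  by move/eqP; rewrite mulf_eq0 (negbTE g0) => /eqP.
set c1 := dot n1 p1 in E1.
set c2 := dot n2 p1 in E2.
have c10 : c1 != 0 by apply/eqP => c0; apply: n01; apply/E1; rewrite dot0r.
have c20 : c2 != 0 by apply/eqP => c0; apply: n02; apply/E2; rewrite dot0r.
set w3 := p3 - p1; set w4 := p4 - p1.
have nw3 : dot n1 w3 = 0 by rewrite dotBr (proj1 (E1 p3) P3) subrr.
have nw4 : dot n2 w4 = 0 by rewrite dotBr (proj1 (E2 p4) P4) subrr.
have n2w3 : dot n2 w3 != 0.
  by apply/eqP; rewrite dotBr => /eqP; rewrite subr_eq0 => /eqP /E2.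
have n1w4 : dot n1 w4 != 0.
  by apply/eqP; rewrite dotBr => /eqP; rewrite subr_eq0 => /eqP /E1.
set b := cross n2 f; set cI := dot n1 b.
set be3 := D3 e w3 h1; set be4 := D3 e w4 h2.
have K3 : dot n2 w3 = be3 * dot n2 (cross n1 f) by apply: keyK.
have K4 : dot n1 w4 = be4 * cI by apply: keyK.
have be30 : be3 != 0 by apply: contra n2w3; rewrite K3 => /eqP ->; rewrite mul0r.
have be40 : be4 != 0 by apply: contra n1w4; rewrite K4 => /eqP ->; rewrite mul0r.
have cI0 : cI != 0 by apply: contra n1w4; rewrite K4 => /eqP ->; rewrite mulr0.
have p2E : p2 = p1 + g%:R *: e by rewrite -Hd addrC subrK.
have p3E : p3 = p1 + w3 by rewrite addrC subrK.
have p4E : p4 = p1 + w4 by rewrite addrC subrK.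
have F1 : det3 p1 p2 p3 = g%:R * be3 * c1.
  rewrite det3E p2E p3E (_ : D3 p1 (p1 + g%:R *: e) (p1 + w3) = g%:R * D3 p1 e w3);
    last by vs; ring.
  have := I2n p1 e w3 n1 h1; rewrite nh1 ne1 nw3 -/c1 => H.
  rewrite (_ : be3 = D3 h1 e w3); last by rewrite /be3; vs; ring.
  rewrite -mulrA; congr (_ * _); lra.
have F3 : det3 p1 p2 p4 = g%:R * be4 * c2.
  rewrite det3E p2E p4E (_ : D3 p1 (p1 + g%:R *: e) (p1 + w4) = g%:R * D3 p1 e w4);
    last by vs; ring.
  have := I2n p1 e w4 n2 h2; rewrite nh2 ne2 nw4 -/c2 => H.
  rewrite (_ : be4 = D3 h2 e w4); last by rewrite /be4; vs; ring.
  rewrite -mulrA; congr (_ * _); lra.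
have F2 : det3 (p2 - p1) (p3 - p1) (p4 - p1) = g%:R * be3 * (be4 * cI).
  rewrite det3E Hd -/w3 -/w4 (_ : D3 (g%:R *: e) w3 w4 = g%:R * D3 e w3 w4);
    last by vs; ring.
  have := I2n e w3 w4 n1 h1; rewrite nh1 ne1 nw3 K4 -/be3 => H.
  rewrite -mulrA; congr (_ * _); lra.
have HIl : Il p1 p2 = g by apply: (Il_eq Ip1 Ie If gpos Hd ef).
have HId1 : (Id 0 pi1)%:R = `|c1|.
  rewrite /Id; apply: (index_char In1 Ih1 nh1) => //.
  - exact: int_dot.
  - move=> x; split; first by case.
    move=> Ix; split => //; exists x, 0.
    split; [|split; [|by rewrite subr0]];
      (apply: (aff_full (q := 0) (a := p1) (b := p2) (c := p3));
        [by left|by right|by right|by right|by rewrite !subr0 -det3E F1 !mulf_neq0]).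
  - move=> x Ix; split.
      apply: (zspan_ind (Q := fun v => exists z : int, dot n1 v = z%:~R * c1)).
      + by exists 0; rewrite dot0r mul0r.
      + by move=> y z [z1 h1'] [z2 h2']; exists (z1 + z2); rewrite dotDr h1' h2' intrD mulrDl.
      + move=> y z [z1 h1']; exists (z * z1).
        by rewrite -scaler_int dotZr h1' intrM mulrA.
      + move=> v [x' [y' [Sx [Sy [_ [_ ->]]]]]].
        have hS u : ([set 0] `|` pi1) u -> exists z : int, dot n1 u = z%:~R * c1.
          case=> [-> | /E1 ->]; first by exists 0; rewrite dot0r mul0r.
          by exists 1; rewrite mul1r.
        have [z1 h1'] := hS _ Sx; have [z2 h2'] := hS _ Sy.
        by exists (z1 - z2); rewrite dotBr h1' h2' intrB mulrBl.
    move=> [z hz].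
    rewrite (_ : x = (x - z%:~R *: p1) *~ 1 + p1 *~ z); last first.
      by rewrite mulr1z -scaler_int subrK.
    apply: zspan2.
      exists (p1 + (x - z%:~R *: p1)), p1; split; [right | split; [by right | split]].
        by apply/E1; rewrite dotDr dotBr dotZr hz -/c1; ring.
      by apply: int_ptD => //; apply: int_ptB => //; apply: int_ptZ => //; apply: intr_int.
      by split => //; rewrite [RHS]addrC addKr.
    exists p1, 0; split; [by right | split; [by left | split => //]].
    by split; [exact: int_pt0 | rewrite subr0].
have HId2 : (Id 0 pi2)%:R = `|c2|.
  rewrite /Id; apply: (index_char In2 Ih2 nh2) => //.
  - exact: int_dot.
  - move=> x; split; first by case.
    move=> Ix; split => //; exists x, 0.
    split; [|split; [|by rewrite subr0]];
      (apply: (aff_full (q := 0) (a := p1) (b := p2) (c := p4));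
        [by left|by right|by right|by right|by rewrite !subr0 -det3E F3 !mulf_neq0]).
  - move=> x Ix; split.
      apply: (zspan_ind (Q := fun v => exists z : int, dot n2 v = z%:~R * c2)).
      + by exists 0; rewrite dot0r mul0r.
      + by move=> y z [z1 h1'] [z2 h2']; exists (z1 + z2); rewrite dotDr h1' h2' intrD mulrDl.
      + move=> y z [z1 h1']; exists (z * z1).
        by rewrite -scaler_int dotZr h1' intrM mulrA.
      + move=> v [x' [y' [Sx [Sy [_ [_ ->]]]]]].
        have hS u : ([set 0] `|` pi2) u -> exists z : int, dot n2 u = z%:~R * c2.
          case=> [-> | /E2 ->]; first by exists 0; rewrite dot0r mul0r.
          by exists 1; rewrite mul1r.
        have [z1 h1'] := hS _ Sx; have [z2 h2'] := hS _ Sy.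
        by exists (z1 - z2); rewrite dotBr h1' h2' intrB mulrBl.
    move=> [z hz].
    rewrite (_ : x = (x - z%:~R *: p1) *~ 1 + p1 *~ z); last first.
      by rewrite mulr1z -scaler_int subrK.
    apply: zspan2.
      exists (p1 + (x - z%:~R *: p1)), p1; split; [right | split; [by right | split]].
        by apply/E2; rewrite dotDr dotBr dotZr hz -/c2; ring.
      by apply: int_ptD => //; apply: int_ptB => //; apply: int_ptZ => //; apply: intr_int.
      by split => //; rewrite [RHS]addrC addKr.
    exists p1, 0; split; [by right | split; [by left | split => //]].
    by split; [exact: int_pt0 | rewrite subr0].
have Ib : int_pt b by apply: int_pt_cross.
have HIsin : (Isin pi1 pi2)%:R = `|cI|.
  rewrite /Isin; apply: (index_char In1 Ih1 nh1) => //.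
  - exact: int_dot.
  - move=> x; split; first by case.
    move=> Ix; split => //; exists (p1 + x), p1.
    split; [|split; [|by rewrite addrC addKr]];
      (apply: (aff_full (q := p1) (a := p2) (b := p3) (c := p4));
        [by left|by left|by left|by right|by rewrite -det3E F2 !mulf_neq0]).
  - move=> x Ix; split.
      apply: (zspan_ind (Q := fun v => exists z : int, dot n1 v = z%:~R * cI)).
      + by exists 0; rewrite dot0r mul0r.
      + by move=> y z [z1 h1'] [z2 h2']; exists (z1 + z2); rewrite dotDr h1' h2' intrD mulrDl.
      + move=> y z [z1 h1']; exists (z * z1).
        by rewrite -scaler_int dotZr h1' intrM mulrA.
      + move=> v [[x' [y' [Sx [Sy [_ [_ ->]]]]]] | [x' [y' [Sx [Sy [Ix' [Iy' ->]]]]]]].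
          by exists 0; rewrite dotBr (proj1 (E1 _) Sx) (proj1 (E1 _) Sy) subrr mul0r.
        have nv : dot n2 (x' - y') = 0.
          by rewrite dotBr (proj1 (E2 _) Sx) (proj1 (E2 _) Sy) subrr.
        have := keyK ne2 nh2 ef ne1 nv; rewrite -/b -/cI => ->.
        have /intrP[z hz] : D3 e (x' - y') h2 \is a Num.int.
          by apply: int_D3 => //; apply: int_ptB.
        by exists z; rewrite hz.
    move=> [z hz].
    rewrite (_ : x = (x - z%:~R *: b) *~ 1 + b *~ z); last first.
      by rewrite mulr1z -scaler_int subrK.
    apply: zspan2.
      left; exists (p1 + (x - z%:~R *: b)), p1; split; [ | split; [by [] | split]].
        by apply/E1; rewrite dotDr dotBr dotZr hz -/cI -/c1; ring.
      by apply: int_ptD => //; apply: int_ptB => //; apply: int_ptZ => //; apply: intr_int.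
      by split => //; rewrite [RHS]addrC addKr.
    right; exists (p1 + b), p1; split; [ | split; [by [] | split]].
      by apply/E2; rewrite dotDr dot_cross_self addr0.
    exact: int_ptD.
    by split => //; rewrite [RHS]addrC addKr.
rewrite HIsin HIl HId1 HId2 /omega F1 F2 F3.
rewrite (_ : g%:R * be3 * (be4 * cI) / (g%:R * be3 * c1 * (g%:R * be4 * c2))
           = cI / (g%:R * c1 * c2)); last by field; rewrite ?g0 ?be30 ?be40 ?c10 ?c20.
by rewrite normf_div !normrM normr_nat.
Qed.
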